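(* Let $n\ge 2$ be an integer that is not a perfect square, and let $a,b$ be positive integers with $a^2-nb^2=-1$. Put $u=a+b\sqrt n$, and let $H_j/K_j$ be the convergents of the simple continued fraction expansion of $u^2$, with $H_{-1}=1$. Then $$\mathcal L\left(\frac1{u^2}\right)=\sum_{k=0}^{\infty}\left[\mathcal L\left(\frac{1}{nb^2(2H_{2k-1})^2}\right)+\mathcal L\left(\frac{1}{(2H_{2k+1}-H_{2k})^2}\right)\right].$$
   Context: $\mathcal L$ is the Rogers dilogarithm: for real $z\le1$, $\mathcal L(z)=\mathrm{Li}_2(z)+\tfrac12\log|z|\log(1-z)$, where $\mathrm{Li}_2(z)=\sum_{m\ge1}z^m/m^2$. If $v=[c_0,c_1,c_2,\dots]$ is the simple continued fraction expansion of $v$ ($c_0=\lfloor v\rfloor$, $c_i\ge1$ integers), the convergent numerators are defined by $H_{-2}=0,H_{-1}=1$, $H_i=c_iH_{i-1}+H_{i-2}$ for $i\ge0$, and denominators by $K_{-2}=1,K_{-1}=0$, $K_i=c_iK_{i-1}+K_{i-2}$, so that $[c_0,\dots,c_i]=H_i/K_i$. *)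

(* Defs.v *)
From Stdlib Require Import Reals ZArith ClassicalEpsilon.
Open Scope R_scope.

(* The limit of a real sequence (chosen classically; meaningful when it converges). *)
Definition seq_lim (u : nat -> R) : R :=
  epsilon (inhabits 0) (fun l => Un_cv u l).

Definition Li2 (z : R) : R :=
  seq_lim (fun N => sum_f_R0 (fun m => z ^ (S m) / (INR (S m)) ^ 2) N).

Definition RogersL (z : R) : R :=
  Li2 z + / 2 * ln (Rabs z) * ln (1 - z).

Definition Rfloor (x : R) : Z := Int_part x.

Fixpoint cf_x (v : R) (i : nat) : R :=
  match i with
  | O => v
  | S j => / (cf_x v j - IZR (Rfloor (cf_x v j)))
  end.

Definition cf_c (v : R) (i : nat) : Z := Rfloor (cf_x v i).

(* cf_HH v i = (H_{i-2}, H_{i-1}), with H_{-2} = 0, H_{-1} = 1,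
   H_i = c_i H_{i-1} + H_{i-2}. *)
Fixpoint cf_HH (v : R) (i : nat) : Z * Z :=
  match i with
  | O => (0%Z, 1%Z)
  | S j => let (p, q) := cf_HH v j in (q, (cf_c v j * q + p)%Z)
  end.

(* SHIFTED indexing: cfH v i = H_{i-1}.  So cfH v 0 = H_{-1} = 1,
   cfH v (j+1) = H_j for j >= 0. *)
Definition cfH (v : R) (i : nat) : Z := snd (cf_HH v i).

(* Main.v *)
Require Import Defs.
From Stdlib Require Import Reals ZArith Lra Lia Psatz ClassicalEpsilon.
From Coquelicot Require Import Coquelicot.
Open Scope R_scope.


Definition aLi (k:nat) : R := match k with O => 0 | S m => / (INR (S m))^2 end.
Definition cLn (k:nat) : R := / INR (S k).

Lemma radius_bounded (a : nat -> R) (x : R) :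
  (forall n, Rabs (a n) <= 1) -> Rabs x < 1 -> Rbar_lt (Rabs x) (CV_radius a).
Proof.
  intros Ha Hx.
  set (r := (1 + Rabs x)/2).
  assert (Hr0 : 0 <= r) by (unfold r; pose proof (Rabs_pos x); lra).
  assert (Hr1 : r < 1) by (unfold r; lra).
  assert (HD : CV_disk a r).
  { unfold CV_disk. apply (@ex_series_le R_AbsRing R_CompleteNormedModule _ (fun n => r ^ n)).
    - intro n. unfold norm; simpl; unfold abs; simpl.
      rewrite Rabs_Rabsolu, Rabs_mult, <- RPow_abs, (Rabs_right r) by lra.
      rewrite <- (Rmult_1_l (r^n)) at 2. apply Rmult_le_compat_r.
      + apply pow_le; lra.
      + apply Ha.
    - exists (/(1-r)). apply is_series_geom. rewrite Rabs_right; lra. }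
  apply Rbar_lt_le_trans with (Finite r).
  - simpl. unfold r. lra.
  - destruct (Lub_Rbar_correct (CV_disk a)) as [Hub _]. apply Hub. exact HD.
Qed.

Lemma seq_lim_eq u l : Un_cv u l -> seq_lim u = l.
Proof.
  intro H. unfold seq_lim.
  pose proof (epsilon_spec (inhabits 0) (fun l => Un_cv u l) (ex_intro _ l H)) as H2.
  simpl in H2. eapply UL_sequence; eauto.
Qed.

Lemma aLi_bound n : Rabs (aLi n) <= 1.
Proof.
  destruct n as [|m].
  - simpl. rewrite Rabs_R0; lra.
  - change (aLi (S m)) with (/ INR (S m) ^ 2).
    assert (H1 : 1 <= INR (S m)) by (apply (le_INR 1); lia).
    rewrite Rabs_right.
    + rewrite <- Rinv_1. apply Rinv_le_contravar; [lra|]. nra.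
    + apply Rle_ge, Rlt_le, Rinv_0_lt_compat. nra.
Qed.

Lemma cLn_bound n : Rabs (cLn n) <= 1.
Proof.
  unfold cLn. assert (H1 : 1 <= INR (S n)) by (apply (le_INR 1); lia).
  rewrite Rabs_right.
  + rewrite <- Rinv_1. apply Rinv_le_contravar; lra.
  + apply Rle_ge, Rlt_le, Rinv_0_lt_compat. lra.
Qed.

Lemma Li2_PS z : Rabs z < 1 -> Li2 z = PSeries aLi z.
Proof.
  intro Hz.
  pose proof (CV_radius_inside aLi z (radius_bounded aLi z aLi_bound Hz)) as Hex.
  apply PSeries_correct in Hex.
  unfold is_pseries in Hex.
  apply is_series_Reals in Hex.
  unfold Li2. apply seq_lim_eq.
  intros eps Heps. destruct (Hex eps Heps) as [N HN].
  exists N. intros n Hn.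
  replace (sum_f_R0 (fun m : nat => z ^ S m / INR (S m) ^ 2) n)
    with (sum_f_R0 (fun k : nat => scal (pow_n z k) (aLi k)) (S n)).
  - apply HN. lia.
  - assert (Hs : forall k, scal (pow_n z k) (aLi k) = z^k * aLi k).
    { intro k. rewrite pow_n_pow. reflexivity. }
    rewrite (sum_eq _ _ _ (fun k _ => Hs k)).
    clear. induction n.
    + simpl. field.
    + rewrite (tech5 (fun m => z ^ S m / INR (S m) ^ 2) n). rewrite <- IHn.
      rewrite (tech5 (fun k => z^k * aLi k) (S n)).
      change (aLi (S (S n))) with (/ INR (S (S n)) ^ 2).
      unfold Rdiv. reflexivity.
Qed.


Lemma const_on (f : R -> R) lo hi :
  (forall t, lo < t < hi -> derivable_pt_lim f t 0) ->
  forall x y, lo < x < hi -> lo < y < hi -> f x = f y.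
Proof.
  intros Hd x y Hx Hy.
  assert (H1 : lo < Rmin x y) by (apply Rmin_glb_lt; lra).
  assert (H2 : Rmax x y < hi) by (apply Rmax_lub_lt; lra).
  assert (H3 := Rmin_l x y). assert (H4 := Rmax_l x y).
  destruct (MVT_gen f x y (fun _ => 0)) as [c [_ Hc]].
  - intros t Ht. apply is_derive_Reals. apply Hd. lra.
  - intros t Ht. apply derivable_continuous_pt. exists 0. apply Hd. lra.
  - lra.
Qed.

Lemma geom_PS t : Rabs t < 1 -> PSeries (fun _ => 1) t = / (1 - t).
Proof.
  intro Ht. apply (is_pseries_unique (fun _ : nat => 1) t). unfold is_pseries.
  apply (is_series_ext (fun n => t ^ n)).
  - intro n. transitivity (pow_n t n * 1). { rewrite Rmult_1_r. symmetry. apply pow_n_pow. } reflexivity.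
  - apply is_series_geom; auto.
Qed.

Lemma ln1_series x : Rabs x < 1 -> x * PSeries cLn x = - ln (1 - x).
Proof.
  intro Hx.
  rewrite <- PSeries_incr_1.
  set (h := fun t => PSeries (PS_incr_1 cLn) t + ln (1 - t)).
  assert (Hrad : forall t, Rabs t < 1 -> Rbar_lt (Rabs t) (CV_radius (PS_incr_1 cLn))).
  { intros t Ht. apply radius_bounded; auto. intro n. destruct n.
    - change (Rabs 0 <= 1). rewrite Rabs_R0. lra.
    - apply cLn_bound. }
  assert (Hd : forall t, -1 < t < 1 -> derivable_pt_lim h t 0).
  { intros t Ht.
    assert (Ht' : Rabs t < 1) by (apply Rabs_def1; lra).
    pose proof (is_derive_PSeries _ t (Hrad t Ht')) as D1.
    apply is_derive_Reals in D1.
    rewrite (PSeries_ext _ (fun _ => 1)) in D1.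
    2:{ intro n. unfold PS_derive. simpl PS_incr_1. unfold cLn.
        field. apply not_0_INR. lia. }
    rewrite geom_PS in D1 by auto.
    assert (D2 : derivable_pt_lim (fun t => ln (1 - t)) t (/ (1 - t) * -1)).
    { apply (derivable_pt_lim_comp (fun t => 1 - t) ln).
      - replace (-1) with (0 - 1) by ring.
        exact (derivable_pt_lim_minus (fct_cte 1) id t 0 1 (derivable_pt_lim_const 1 t) (derivable_pt_lim_id t)).
      - apply derivable_pt_lim_ln. lra. }
    replace 0 with (/ (1 - t) + / (1 - t) * -1) by ring.
    apply (derivable_pt_lim_plus _ _ t _ _ D1 D2). }
  assert (Hx' : -1 < x < 1) by (apply Rabs_def2 in Hx; lra).
  pose proof (const_on h (-1) 1 Hd x 0 Hx' ltac:(lra)) as E.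
  unfold h in E. rewrite PSeries_0 in E. simpl in E.
  rewrite Rminus_0_r, ln_1 in E. 
  assert (E2 : PSeries (PS_incr_1 cLn) x = - ln (1 - x)).
  { unfold zero in E; simpl in E. lra. }
  exact E2.
Qed.


Definition Lp (z : R) : R := PSeries aLi z + / 2 * ln (Rabs z) * ln (1 - z).
Definition Ld (x : R) : R := - / 2 * (ln (1 - x) / x + ln x / (1 - x)).

Lemma RogersL_Lp z : Rabs z < 1 -> RogersL z = Lp z.
Proof. intro H. unfold RogersL, Lp. rewrite Li2_PS by auto. reflexivity. Qed.

Lemma aLi_rad x : Rabs x < 1 -> Rbar_lt (Rabs x) (CV_radius aLi).
Proof. intro H. apply radius_bounded; auto. apply aLi_bound. Qed.

Lemma Li2_deriv x : 0 < x < 1 -> derivable_pt_lim (PSeries aLi) x (- ln (1 - x) / x).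
Proof.
  intro Hx.
  assert (Hx' : Rabs x < 1) by (rewrite Rabs_right; lra).
  pose proof (is_derive_PSeries _ x (aLi_rad x Hx')) as D.
  apply is_derive_Reals in D.
  rewrite (PSeries_ext _ cLn) in D.
  2:{ intro n. unfold PS_derive. change (aLi (S n)) with (/ INR (S n) ^ 2). unfold cLn.
      field. apply not_0_INR. lia. }
  replace (- ln (1 - x) / x) with (PSeries cLn x); auto.
  rewrite <- ln1_series by auto. field. lra.
Qed.

Lemma Lp_deriv x : 0 < x < 1 -> derivable_pt_lim Lp x (Ld x).
Proof.
  intro Hx.
  pose proof (Li2_deriv x Hx) as D1.
  assert (D2 : derivable_pt_lim (fun t => ln (1 - t)) x (/ (1 - x) * -1)).
  { apply (derivable_pt_lim_comp (fun t => 1 - t) ln).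
    - replace (-1) with (0 - 1) by ring.
      exact (derivable_pt_lim_minus (fct_cte 1) id x 0 1 (derivable_pt_lim_const 1 x) (derivable_pt_lim_id x)).
    - apply derivable_pt_lim_ln. lra. }
  assert (D3 : derivable_pt_lim (fun t => ln (Rabs t)) x (/ (Rabs x) * 1)).
  { apply (derivable_pt_lim_comp Rabs ln).
    - apply Rabs_derive_1. lra.
    - apply derivable_pt_lim_ln. rewrite Rabs_right; lra. }
  pose proof (derivable_pt_lim_mult (fct_cte (/2)) (fun t => ln (Rabs t)) x _ _ (derivable_pt_lim_const (/2) x) D3) as D4.
  pose proof (derivable_pt_lim_mult _ _ x _ _ D4 D2) as D5.
  pose proof (derivable_pt_lim_plus _ _ x _ _ D1 D5) as D6.
  replace (Ld x) with (- ln (1 - x) / x +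
     ((0 * ln (Rabs x) + fct_cte (/ 2) x * (/ Rabs x * 1)) * ln (1 - x) +
      (fct_cte (/ 2) x * ln (Rabs x)) * (/ (1 - x) * -1))).
  - exact D6.
  - unfold fct_cte, Ld. rewrite Rabs_right by lra. field. lra.
Qed.

Lemma Lp_cont x : 0 < x < 1 -> continuity_pt Lp x.
Proof. intro H. apply derivable_continuous_pt. exists (Ld x). apply Lp_deriv; auto. Qed.

Lemma Lp_0 : Lp 0 = 0.
Proof. unfold Lp. rewrite PSeries_0. simpl. rewrite Rminus_0_r, ln_1. ring. Qed.


Lemma ln_le_m1 s : 0 < s -> ln s <= s - 1.
Proof. intro H. pose proof (exp_ineq1_le (ln s)). rewrite exp_ln in H0; lra. Qed.

Lemma sln_bound s : 0 < s < 1 -> s * Rabs (ln s) <= 2 * sqrt s.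
Proof.
  intro Hs. set (r := sqrt s).
  assert (Hr0 : 0 < r) by (apply sqrt_lt_R0; lra).
  assert (Hrr : r * r = s) by (apply sqrt_sqrt; lra).
  assert (Hr1 : r < 1) by nra.
  assert (E : ln s = 2 * ln r) by (rewrite <- Hrr, ln_mult by lra; ring).
  assert (Hlr : ln r < 0) by (rewrite <- ln_1; apply ln_increasing; lra).
  pose proof (ln_le_m1 (/ r) ltac:(apply Rinv_0_lt_compat; lra)) as H1.
  rewrite ln_Rinv in H1 by lra.
  rewrite E, Rabs_left by lra.
  rewrite <- Hrr.
  assert (H2 : r * (- ln r) <= 1 - r).
  { assert (r * / r = 1) by (field; lra). nra. }
  nra.
Qed.

Lemma ln1m_bound z : -1/2 <= z <= 1/2 -> Rabs (ln (1 - z)) <= 2 * Rabs z.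
Proof.
  intro Hz.
  pose proof (ln_le_m1 (1 - z) ltac:(lra)) as H1.
  pose proof (ln_le_m1 (/ (1 - z)) ltac:(apply Rinv_0_lt_compat; lra)) as H2.
  rewrite ln_Rinv in H2 by lra.
  assert (H3 : / (1 - z) - 1 = z / (1 - z)) by (field; lra).
  assert (H4 : z / (1 - z) <= 2 * Rabs z).
  { destruct (Rle_dec 0 z).
    - rewrite Rabs_right by lra. apply Rmult_le_reg_r with (1 - z); [lra|].
      unfold Rdiv. rewrite Rmult_assoc, Rinv_l by lra. nra.
    - rewrite Rabs_left by lra. apply Rle_trans with 0; [|lra].
      unfold Rdiv. apply Rmult_le_0_r; [lra|]. apply Rlt_le, Rinv_0_lt_compat; lra. }
  apply Rabs_le. split.
  - lra.
  - destruct (Rle_dec 0 z).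
    + rewrite Rabs_right by lra. lra.
    + rewrite Rabs_left by lra. lra.
Qed.

Lemma g_cont0 : continuity_pt (fun z => ln (Rabs z) * ln (1 - z)) 0.
Proof.
  unfold continuity_pt, continue_in, limit1_in, limit_in. simpl.
  intros eps Heps.
  exists (Rmin (1/2) ((eps/4)^2)). split.
  - apply Rmin_glb_lt; [lra|]. nra.
  - intros z [[_ Hz0] Hz]. unfold R_dist in *.
    rewrite Rminus_0_r, ln_1, Rmult_0_r, Rminus_0_r.
    rewrite Rminus_0_r in Hz.
    assert (Hz1 : Rabs z < 1/2) by (eapply Rlt_le_trans; [apply Hz| apply Rmin_l]).
    assert (Hz2 : Rabs z < (eps/4)^2) by (eapply Rlt_le_trans; [apply Hz| apply Rmin_r]).
    assert (Hza : 0 < Rabs z) by (apply Rabs_pos_lt; auto).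
    pose proof (sln_bound (Rabs z) ltac:(lra)) as B1.
    assert (Hzb : -1/2 <= z <= 1/2) by (apply Rabs_def2 in Hz1; lra).
    pose proof (ln1m_bound z Hzb) as B2.
    set (r := sqrt (Rabs z)) in *.
    assert (Hr0 : 0 <= r) by apply sqrt_pos.
    assert (Hrr : r * r = Rabs z) by (apply sqrt_sqrt; lra).
    assert (Hr : r < eps / 4) by nra.
    rewrite Rabs_mult.
    apply Rle_lt_trans with (Rabs (ln (Rabs z)) * (2 * Rabs z)).
    + apply Rmult_le_compat_l; [apply Rabs_pos| exact B2].
    + pose proof (Rabs_pos (ln (Rabs z))). nra.
Qed.

Lemma Lp_cont0 : continuity_pt Lp 0.
Proof.
  assert (H0 : Rabs 0 < 1) by (rewrite Rabs_R0; lra).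
  pose proof (PSeries_continuity aLi 0 (aLi_rad 0 H0)) as C1.
  pose proof (continuity_pt_mult (fct_cte (/2)) _ 0 (continuity_pt_const (fct_cte (/2)) 0 (fun _ _ => eq_refl)) g_cont0) as C2.
  pose proof (continuity_pt_plus _ _ 0 C1 C2) as C3.
  unfold continuity_pt, continue_in, limit1_in, limit_in in *. simpl in *.
  intros eps Heps. destruct (C3 eps Heps) as [d [Hd H]]. exists d. split; auto.
  intros z Hz. specialize (H z Hz). unfold Lp, fct_cte, plus_fct, mult_fct in *.
  replace (PSeries aLi z + / 2 * ln (Rabs z) * ln (1 - z)) with
    (PSeries aLi z + / 2 * (ln (Rabs z) * ln (1 - z))) by ring.
  replace (PSeries aLi 0 + / 2 * ln (Rabs 0) * ln (1 - 0)) with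
    (PSeries aLi 0 + / 2 * (ln (Rabs 0) * ln (1 - 0))) by ring.
  exact H.
Qed.


Definition CstL : R := Lp (1/2) + Lp (1/2).

Lemma reflection x : 0 < x < 1 -> Lp x + Lp (1 - x) = CstL.
Proof.
  intro Hx. unfold CstL.
  replace (Lp (1/2) + Lp (1/2)) with (Lp (1/2) + Lp (1 - 1/2)) by (f_equal; f_equal; field).
  apply (const_on (fun t => Lp t + Lp (1 - t)) 0 1); [|lra|lra].
  intros t Ht.
  assert (D2 : derivable_pt_lim (fun t => Lp (1 - t)) t (Ld (1 - t) * -1)).
  { apply (derivable_pt_lim_comp (fun t => 1 - t) Lp).
    - replace (-1) with (0 - 1) by ring.
      exact (derivable_pt_lim_minus (fct_cte 1) id t 0 1 (derivable_pt_lim_const 1 t) (derivable_pt_lim_id t)).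
    - apply Lp_deriv. lra. }
  pose proof (derivable_pt_lim_plus _ _ t _ _ (Lp_deriv t Ht) D2) as D.
  replace 0 with (Ld t + Ld (1 - t) * -1). { exact D. }
  unfold Ld. replace (1 - (1 - t)) with t by ring. field. lra.
Qed.

Definition A5 x y := x * (1 - y) / (1 - x * y).
Definition B5 x y := y * (1 - x) / (1 - x * y).

Lemma A5_deriv x y : 1 - x * y <> 0 ->
  derivable_pt_lim (fun x => A5 x y) x ((1 - y) / (1 - x * y) ^ 2).
Proof.
  intro H. apply is_derive_Reals. unfold A5. auto_derive.
  - auto.
  - field. auto.
Qed.

Lemma B5_deriv x y : 1 - x * y <> 0 ->
  derivable_pt_lim (fun x => B5 x y) x (- y * (1 - y) / (1 - x * y) ^ 2).
Proof.
  intro H. apply is_derive_Reals. unfold B5. auto_derive.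
  - auto.
  - field. auto.
Qed.

Lemma five_combo x y : 0 < x < 1 -> 0 < y < 1 ->
  Ld x - Ld (x * y) * y - Ld (A5 x y) * ((1 - y) / (1 - x * y) ^ 2)
  - Ld (B5 x y) * (- y * (1 - y) / (1 - x * y) ^ 2) = 0.
Proof.
  intros Hx Hy.
  assert (Hxy : 0 < x * y < 1) by (split; nra).
  assert (Z0 : 0 < 1 - x * y) by lra.
  assert (E1 : ln (x * y) = ln x + ln y) by (apply ln_mult; lra).
  assert (E2 : ln (A5 x y) = ln x + ln (1 - y) - ln (1 - x * y)).
  { unfold A5. rewrite ln_div, ln_mult; try lra; nra. }
  assert (E3 : ln (1 - A5 x y) = ln (1 - x) - ln (1 - x * y)).
  { replace (1 - A5 x y) with ((1 - x) / (1 - x * y)) by (unfold A5; field; lra).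
    rewrite ln_div; lra. }
  assert (E4 : ln (B5 x y) = ln y + ln (1 - x) - ln (1 - x * y)).
  { unfold B5. rewrite ln_div, ln_mult; try lra; nra. }
  assert (E5 : ln (1 - B5 x y) = ln (1 - y) - ln (1 - x * y)).
  { replace (1 - B5 x y) with ((1 - y) / (1 - x * y)) by (unfold B5; field; lra).
    rewrite ln_div; lra. }
  unfold Ld. rewrite E1, E2, E3, E4, E5.
  assert (N1 : 1 - A5 x y <> 0).
  { replace (1 - A5 x y) with ((1 - x) / (1 - x * y)) by (unfold A5; field; lra).
    apply Rgt_not_eq, Rdiv_lt_0_compat; lra. }
  assert (N2 : 1 - B5 x y <> 0).
  { replace (1 - B5 x y) with ((1 - y) / (1 - x * y)) by (unfold B5; field; lra).
    apply Rgt_not_eq, Rdiv_lt_0_compat; lra. }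
  replace (1 - A5 x y) with ((1 - x) / (1 - x * y)) by (unfold A5; field; lra).
  replace (1 - B5 x y) with ((1 - y) / (1 - x * y)) by (unfold B5; field; lra).
  unfold A5, B5. field. repeat split; lra.
Qed.

Lemma const_zero (F : R -> R) :
  (forall t, 0 < t < 1 -> derivable_pt_lim F t 0) -> continuity_pt F 0 -> F 0 = 0 ->
  forall x, 0 < x < 1 -> F x = 0.
Proof.
  intros Hd Hc H0 x Hx.
  destruct (Req_dec (F x) 0) as [E|NE]; auto. exfalso.
  unfold continuity_pt, continue_in, limit1_in, limit_in in Hc. simpl in Hc.
  destruct (Hc (Rabs (F x)) (Rabs_pos_lt _ NE)) as [d [Hd0 Hd1]].
  set (t := Rmin (d/2) (1/2)).
  assert (Ht1 : t <= d/2) by apply Rmin_l.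
  assert (Ht2 : t <= 1/2) by apply Rmin_r.
  assert (Ht0 : 0 < t) by (apply Rmin_glb_lt; lra).
  specialize (Hd1 t). unfold R_dist in Hd1. rewrite H0, Rminus_0_r, Rminus_0_r in Hd1.
  assert (Et : F t = F x) by (apply (const_on F 0 1); auto; lra).
  rewrite Et in Hd1. 
  assert (Rabs (F x) < Rabs (F x)).
  { apply Hd1. split.
    - split; [exact I| lra].
    - rewrite Rabs_right; lra. }
  lra.
Qed.

Lemma mul_y_deriv t y : derivable_pt_lim (fun t => t * y) t y.
Proof. apply is_derive_Reals. auto_derive; auto. ring. Qed.

Lemma five_term x y : 0 < x < 1 -> 0 < y < 1 ->
  Lp x + Lp y - Lp (x * y) - Lp (A5 x y) - Lp (B5 x y) = 0.
Proof.
  intros Hx Hy.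
  apply (const_zero (fun t => Lp t + Lp y - Lp (t * y) - Lp (A5 t y) - Lp (B5 t y))); auto.
  - intros t Ht.
    assert (Hty : 0 < t * y < 1) by (split; nra).
    assert (Z0 : 1 - t * y <> 0) by lra.
    assert (HA : 0 < A5 t y < 1).
    { unfold A5. split.
      - apply Rdiv_lt_0_compat; nra.
      - apply Rmult_lt_reg_r with (1 - t * y); [lra|]. unfold Rdiv.
        rewrite Rmult_assoc, Rinv_l, Rmult_1_r by lra. nra. }
    assert (HB : 0 < B5 t y < 1).
    { unfold B5. split.
      - apply Rdiv_lt_0_compat; nra.
      - apply Rmult_lt_reg_r with (1 - t * y); [lra|]. unfold Rdiv.
        rewrite Rmult_assoc, Rinv_l, Rmult_1_r by lra. nra. }
    pose proof (derivable_pt_lim_comp (fun t => t * y) Lp t _ _ (mul_y_deriv t y) (Lp_deriv _ Hty)) as D1.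
    pose proof (derivable_pt_lim_comp (fun t => A5 t y) Lp t _ _ (A5_deriv t y Z0) (Lp_deriv _ HA)) as D2.
    pose proof (derivable_pt_lim_comp (fun t => B5 t y) Lp t _ _ (B5_deriv t y Z0) (Lp_deriv _ HB)) as D3.
    pose proof (derivable_pt_lim_plus _ _ t _ _ (Lp_deriv t Ht) (derivable_pt_lim_const (Lp y) t)) as D0.
    pose proof (derivable_pt_lim_minus _ _ t _ _ D0 D1) as D4.
    pose proof (derivable_pt_lim_minus _ _ t _ _ D4 D2) as D5.
    pose proof (derivable_pt_lim_minus _ _ t _ _ D5 D3) as D6.
    pose proof (five_combo t y Ht Hy) as C.
    replace 0 with (Ld t + 0 - Ld (t * y) * y - Ld (A5 t y) * ((1 - y) / (1 - t * y) ^ 2)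
      - Ld (B5 t y) * (- y * (1 - y) / (1 - t * y) ^ 2)) by lra.
    exact D6.
  - assert (Z0 : 1 - 0 * y <> 0) by lra.
    assert (C1 : continuity_pt (fun t => Lp (t * y)) 0).
    { apply (continuity_pt_comp (fun t => t * y) Lp).
      - apply derivable_continuous_pt. exists y. apply mul_y_deriv.
      - replace (0 * y) with 0 by ring. apply Lp_cont0. }
    assert (C2 : continuity_pt (fun t => Lp (A5 t y)) 0).
    { apply (continuity_pt_comp (fun t => A5 t y) Lp).
      - apply derivable_continuous_pt. eexists. apply A5_deriv. auto.
      - replace (A5 0 y) with 0 by (unfold A5; field; auto). apply Lp_cont0. }
    assert (C3 : continuity_pt (fun t => Lp (B5 t y)) 0).
    { apply (continuity_pt_comp (fun t => B5 t y) Lp).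
      - apply derivable_continuous_pt. eexists. apply B5_deriv. auto.
      - replace (B5 0 y) with y by (unfold B5; field; auto). apply Lp_cont. auto. }
    pose proof (continuity_pt_plus _ _ 0 Lp_cont0 (continuity_pt_const (fct_cte (Lp y)) 0 (fun _ _ => eq_refl))) as C0.
    pose proof (continuity_pt_minus _ _ 0 C0 C1) as C4.
    pose proof (continuity_pt_minus _ _ 0 C4 C2) as C5.
    exact (continuity_pt_minus _ _ 0 C5 C3).
  - replace (0 * y) with 0 by ring.
    replace (A5 0 y) with 0 by (unfold A5; field; lra).
    replace (B5 0 y) with y by (unfold B5; field; lra).
    rewrite Lp_0. ring.
Qed.


Definition rr (q : R) (k : nat) : R := (1 - q ^ k) / (1 - q).
Definition am (q : R) (j : nat) : R := q ^ (j + 1) / (rr q (j + 2)) ^ 2.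
Definition Pp (q : R) (i : nat) : R := Lp (rr q i / rr q (S i)) - Lp (/ rr q (S i)).

Lemma pow_le1 q k : 0 < q < 1 -> 0 < q ^ k <= 1.
Proof.
  intros Hq. split. apply pow_lt; lra.
  rewrite <- (pow1 k). apply pow_incr. lra.
Qed.

Lemma step q j : 0 < q < 1 -> Lp (am q j) = Pp q (j + 2) - Pp q (j + 1).
Proof.
  intro Hq.
  set (Q := q ^ (j + 1)).
  assert (HQ : 0 < Q <= q).
  { unfold Q. replace (j + 1)%nat with (S j) by lia. simpl.
    pose proof (pow_le1 q j Hq). split; nra. }
  assert (R1 : rr q (j + 1) = (1 - Q) / (1 - q)) by reflexivity.
  assert (R2 : rr q (j + 2) = (1 - q * Q) / (1 - q)).
  { unfold rr, Q. replace (j + 2)%nat with (S (j + 1)) by lia. reflexivity. }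
  assert (R3 : rr q (S (j + 2)) = (1 - q * (q * Q)) / (1 - q)).
  { unfold rr, Q. replace (S (j + 2))%nat with (S (S (j + 1))) by lia. reflexivity. }
  assert (Hq1 : 0 < 1 - q) by lra.
  assert (Hr1 : 1 <= (1 - Q) / (1 - q)).
  { apply Rmult_le_reg_r with (1 - q); auto. unfold Rdiv. rewrite Rmult_assoc, Rinv_l by lra. lra. }
  assert (Hr2 : 1 < (1 - q * Q) / (1 - q)).
  { apply Rmult_lt_reg_r with (1 - q); auto. unfold Rdiv. rewrite Rmult_assoc, Rinv_l by lra. nra. }
  assert (Hr3 : (1 - q * Q) / (1 - q) < (1 - q * (q * Q)) / (1 - q)).
  { unfold Rdiv. apply Rmult_lt_compat_r. apply Rinv_0_lt_compat; lra. assert (0 < q * Q) by nra. nra. }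
  set (r1 := (1 - Q) / (1 - q)) in *.
  set (r2 := (1 - q * Q) / (1 - q)) in *.
  set (r3 := (1 - q * (q * Q)) / (1 - q)) in *.
  unfold am, Pp. fold Q. rewrite R2.
  replace (S (j + 1)) with (j + 2)%nat by lia.
  rewrite R1, R2, R3.
  set (X := 1 - Q / r2 ^ 2).
  set (Y := r2 / r3).
  assert (Ham : 0 < Q / r2 ^ 2 < 1).
  { split. apply Rdiv_lt_0_compat; nra.
    apply Rmult_lt_reg_r with (r2 ^ 2); [nra|]. unfold Rdiv. rewrite Rmult_assoc, Rinv_l by nra. nra. }
  assert (HX : 0 < X < 1) by (unfold X; lra).
  assert (HY : 0 < Y < 1).
  { unfold Y. split. apply Rdiv_lt_0_compat; lra.
    apply Rmult_lt_reg_r with r3; [lra|]. unfold Rdiv. rewrite Rmult_assoc, Rinv_l by lra. lra. }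
  assert (HXY : X * Y = r1 / r2).
  { unfold X, Y, r1, r2, r3. field. repeat split; nra. }
  assert (HA : A5 X Y = 1 - / r2).
  { unfold A5. rewrite HXY.
    assert (E : 1 - r1 / r2 = Q / r2) by (unfold r1, r2; field; split; nra).
    rewrite E. unfold X, Y, r2, r3. field. repeat split; nra. }
  assert (HB : B5 X Y = / r3).
  { unfold B5. rewrite HXY.
    assert (E : 1 - r1 / r2 = Q / r2) by (unfold r1, r2; field; split; nra).
    rewrite E. unfold X, Y, r2, r3. field. repeat split; nra. }
  pose proof (five_term X Y HX HY) as F5.
  rewrite HA, HB, HXY in F5.
  pose proof (reflection (Q / r2 ^ 2) Ham) as Rf1. fold X in Rf1.
  assert (Hi2 : 0 < / r2 < 1).
  { split. apply Rinv_0_lt_compat; lra. rewrite <- Rinv_1. apply Rinv_lt_contravar; lra. }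
  pose proof (reflection (/ r2) Hi2) as Rf2.
  lra.
Qed.

Lemma geom0 q : 0 < q < 1 -> is_lim_seq (fun i => q ^ i) 0.
Proof. intro H. apply is_lim_seq_geom. rewrite Rabs_right; lra. Qed.

Lemma lim_u q : 0 < q < 1 -> Un_cv (fun i => 1 - rr q i / rr q (S i)) 0.
Proof.
  intro Hq. apply is_lim_seq_Reals.
  assert (L1 : is_lim_seq (fun i => 1 - (1 - q ^ i) / (1 - q * q ^ i)) (1 - (1 - 0) / (1 - q * 0))).
  { apply is_lim_seq_minus'. apply is_lim_seq_const.
    apply is_lim_seq_div'.
    - apply is_lim_seq_minus'. apply is_lim_seq_const. apply geom0; auto.
    - apply is_lim_seq_minus'. apply is_lim_seq_const.
      apply is_lim_seq_mult'. apply is_lim_seq_const. apply geom0; auto.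
    - lra. }
  replace (1 - (1 - 0) / (1 - q * 0)) with 0 in L1 by field.
  revert L1; apply is_lim_seq_ext.
  intro i. unfold rr. simpl pow. 
  pose proof (pow_le1 q i Hq). field. split; apply Rgt_not_eq; nra.
Qed.

Lemma lim_v q : 0 < q < 1 -> Un_cv (fun i => / rr q (S i)) (1 - q).
Proof.
  intro Hq. apply is_lim_seq_Reals.
  assert (L1 : is_lim_seq (fun i => (1 - q) / (1 - q * q ^ i)) ((1 - q) / (1 - q * 0))).
  { apply is_lim_seq_div'.
    - apply is_lim_seq_const.
    - apply is_lim_seq_minus'. apply is_lim_seq_const.
      apply is_lim_seq_mult'. apply is_lim_seq_const. apply geom0; auto.
    - lra. }
  replace ((1 - q) / (1 - q * 0)) with (1 - q) in L1 by field.
  revert L1; apply is_lim_seq_ext.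
  intro i. unfold rr. simpl pow.
  pose proof (pow_le1 q i Hq). field. split; apply Rgt_not_eq; nra.
Qed.

Lemma ratio_bounds q i : 0 < q < 1 -> (1 <= i)%nat ->
  0 < rr q i / rr q (S i) < 1.
Proof.
  intros Hq Hi.
  assert (E : rr q i / rr q (S i) = (1 - q ^ i) / (1 - q * q ^ i)).
  { unfold rr. simpl pow. pose proof (pow_le1 q i Hq). field. split; apply Rgt_not_eq; nra. }
  rewrite E.
  assert (Hqi : 0 < q ^ i <= q).
  { destruct i as [|i]; [lia|]. simpl. pose proof (pow_le1 q i Hq). split; nra. }
  split.
  - apply Rdiv_lt_0_compat; nra.
  - apply Rmult_lt_reg_r with (1 - q * q ^ i); [nra|]. unfold Rdiv.
    rewrite Rmult_assoc, Rinv_l by nra. nra.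
Qed.

Lemma Pp_lim q : 0 < q < 1 -> Un_cv (fun N => Pp q (2 * N + 3)) (Lp q).
Proof.
  intro Hq.
  set (W := fun i => CstL - Lp (1 - rr q i / rr q (S i)) - Lp (/ rr q (S i))).
  assert (HW : Un_cv W (CstL - Lp 0 - Lp (1 - q))).
  { apply CV_minus. apply CV_minus.
    - intros eps He. exists O. intros. unfold R_dist. rewrite Rminus_diag, Rabs_R0. lra.
    - apply continuity_seq. apply Lp_cont0. apply lim_u; auto.
    - apply continuity_seq. apply Lp_cont. lra. apply lim_v; auto. }
  rewrite Lp_0 in HW.
  assert (E : CstL - 0 - Lp (1 - q) = Lp q) by (pose proof (reflection q Hq); lra).
  rewrite E in HW.
  intros eps He. destruct (HW eps He) as [N0 HN]. exists N0. intros n Hn.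
  assert (EP : Pp q (2 * n + 3) = W (2 * n + 3)%nat).
  { unfold Pp, W. pose proof (reflection _ (ratio_bounds q (2 * n + 3) Hq ltac:(lia))). lra. }
  rewrite EP. apply HN. lia.
Qed.

Lemma term_tel q k : 0 < q < 1 ->
  Lp (am q (2 * k)) + Lp (am q (2 * k + 1)) = Pp q (2 * k + 3) - Pp q (2 * k + 1).
Proof.
  intro Hq. rewrite (step q (2 * k)), (step q (2 * k + 1)) by auto.
  replace (2 * k + 1 + 2)%nat with (2 * k + 3)%nat by lia.
  replace (2 * k + 1 + 1)%nat with (2 * k + 2)%nat by lia. ring.
Qed.

Lemma Pp_1 q : 0 < q < 1 -> Pp q 1 = 0.
Proof.
  intro Hq. unfold Pp. replace (rr q 1) with 1 by (unfold rr; simpl; field; lra).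
  replace (1 / rr q 2) with (/ rr q 2) by (unfold Rdiv; ring). ring.
Qed.

Lemma sum_tel q N : 0 < q < 1 ->
  sum_f_R0 (fun k => Lp (am q (2 * k)) + Lp (am q (2 * k + 1))) N = Pp q (2 * N + 3).
Proof.
  intro Hq. induction N.
  - change (Lp (am q (2 * 0)) + Lp (am q (2 * 0 + 1)) = Pp q (2 * 0 + 3)).
    rewrite term_tel by auto. replace (2 * 0 + 1)%nat with 1%nat by lia.
    rewrite Pp_1 by auto. ring.
  - rewrite tech5, IHN, term_tel by auto.
    replace (2 * S N + 1)%nat with (2 * N + 3)%nat by lia.
    replace (2 * S N + 3)%nat with (2 * S N + 3)%nat by lia. ring.
Qed.

Theorem main_identity q : 0 < q < 1 ->
  infinite_sum (fun k => Lp (am q (2 * k)) + Lp (am q (2 * k + 1))) (Lp q).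
Proof.
  intros Hq eps He. destruct (Pp_lim q Hq eps He) as [N HN]. exists N.
  intros n Hn. rewrite sum_tel by auto. apply HN. auto.
Qed.


Lemma floor_eq x (z : Z) : IZR z <= x < IZR z + 1 -> Rfloor x = z.
Proof.
  intro H. unfold Rfloor, Int_part.
  assert (E : (z + 1)%Z = up x).
  { apply tech_up; rewrite plus_IZR; simpl; lra. }
  lia.
Qed.

Lemma cf_x_S v i : cf_x v (S i) = / (cf_x v i - IZR (Rfloor (cf_x v i))).
Proof. reflexivity. Qed.

Lemma cf_HH_S v j : cf_HH v (S j) =
  (snd (cf_HH v j), (cf_c v j * snd (cf_HH v j) + fst (cf_HH v j))%Z).
Proof. simpl. destruct (cf_HH v j). reflexivity. Qed.

Fixpoint SP (t : Z) (k : nat) : Z * Z :=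
  match k with
  | O => (1%Z, (t + 2)%Z)
  | S k' => let (p, r) := SP t k' in (r, ((t + 2) * r - p)%Z)
  end.
Definition Sk t k := fst (SP t k).

Lemma Sk_snd t k : snd (SP t k) = Sk t (S k).
Proof. unfold Sk. simpl. destruct (SP t k). reflexivity. Qed.

Lemma Sk_rec t k : Sk t (S (S k)) = ((t + 2) * Sk t (S k) - Sk t k)%Z.
Proof.
  unfold Sk. simpl. destruct (SP t k) as [p r]. simpl. reflexivity.
Qed.

Lemma Sk_0 t : Sk t 0 = 1%Z. Proof. reflexivity. Qed.
Lemma Sk_1 t : Sk t 1 = (t + 2)%Z. Proof. reflexivity. Qed.

Section CF.
Variable w : R.
Variable t : Z.
Hypothesis hT : IZR t + 2 - w = / w.
Hypothesis hw : 4 <= w.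
Hypothesis ht : (0 <= t)%Z.

Let q := / w.

Lemma q_bounds : 0 < q <= 1/4.
Proof.
  unfold q. split. apply Rinv_0_lt_compat; lra.
  replace (1/4) with (/4) by field. apply Rinv_le_contravar; lra.
Qed.

Lemma cf_vals j : cf_x w (S (2 * j)) = / (1 - q) /\ cf_x w (S (S (2 * j))) = w - 1.
Proof.
  pose proof q_bounds as Hq.
  assert (HwT : w = IZR t + 2 - q) by (unfold q in *; lra).
  assert (Hq1 : 0 < 1 - q) by lra.
  assert (F1 : Rfloor (/ (1 - q)) = 1%Z).
  { apply floor_eq. simpl. split.
    - rewrite <- Rinv_1. apply Rinv_le_contravar; lra.
    - replace (1 + 1) with (/ (1/2)) by field. apply Rinv_lt_contravar; nra. }
  assert (F2 : Rfloor (w - 1) = t).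
  { apply floor_eq. lra. }
  assert (E2 : / (/ (1 - q) - IZR 1) = w - 1).
  { simpl IZR. unfold q in *.
    replace (/ (1 - / w) - 1) with (/ (w - 1)) by (field; split; lra).
    rewrite Rinv_inv. reflexivity. }
  assert (X1 : cf_x w (S (2 * j)) = / (1 - q)).
  { induction j.
    - simpl mult. rewrite cf_x_S. simpl cf_x.
      assert (F0 : Rfloor w = (t + 1)%Z) by (apply floor_eq; rewrite plus_IZR; simpl; lra).
      rewrite F0, plus_IZR. simpl IZR.
      replace (w - (IZR t + 1)) with (1 - q) by lra. reflexivity.
    - replace (2 * S j)%nat with (S (S (2 * j))) by lia.
      rewrite cf_x_S. rewrite (cf_x_S w (S (2 * j))). rewrite IHj, F1, E2, F2.
      replace (w - 1 - IZR t) with (1 - q) by lra. reflexivity. }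
  split; auto. rewrite cf_x_S, X1, F1. exact E2.
Qed.

Lemma cf_c0 : cf_c w 0 = (t + 1)%Z.
Proof.
  pose proof q_bounds as Hq. unfold cf_c. simpl.
  apply floor_eq. rewrite plus_IZR. simpl. unfold q in *. lra.
Qed.

Lemma cf_codd j : cf_c w (S (2 * j)) = 1%Z.
Proof.
  pose proof q_bounds as Hq. unfold cf_c. rewrite (proj1 (cf_vals j)).
  apply floor_eq. simpl. split.
  - rewrite <- Rinv_1. apply Rinv_le_contravar; lra.
  - replace (1 + 1) with (/ (1/2)) by field. apply Rinv_lt_contravar; nra.
Qed.

Lemma cf_ceven j : cf_c w (S (S (2 * j))) = t.
Proof.
  pose proof q_bounds as Hq. unfold cf_c. rewrite (proj2 (cf_vals j)).
  apply floor_eq. unfold q in *. lra.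
Qed.

Lemma cf_HH_vals k :
  cf_HH w (S (2 * k)) = (Sk t k, (Sk t (S k) - Sk t k)%Z) /\
  cf_HH w (S (S (2 * k))) = ((Sk t (S k) - Sk t k)%Z, Sk t (S k)).
Proof.
  induction k.
  - assert (H1 : cf_HH w 1 = (1%Z, (t + 1)%Z)).
    { rewrite cf_HH_S. simpl (cf_HH w 0). simpl fst; simpl snd. rewrite cf_c0. f_equal; ring. }
    assert (H2 : cf_HH w 2 = ((t + 1)%Z, (t + 2)%Z)).
    { rewrite cf_HH_S, H1. simpl fst; simpl snd. pose proof (cf_codd 0) as C. simpl in C.
      rewrite C. f_equal; ring. }
    change (S (2 * 0)) with 1%nat. change (S (S (2 * 0))) with 2%nat.
    rewrite H1, H2, Sk_0, Sk_1. split; f_equal; ring.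
  - destruct IHk as [_ I2].
    replace (2 * S k)%nat with (S (S (2 * k))) by lia.
    assert (E1 : cf_HH w (S (S (S (2 * k)))) = (Sk t (S k), (Sk t (S (S k)) - Sk t (S k))%Z)).
    { rewrite cf_HH_S, I2. simpl fst. simpl snd. rewrite cf_ceven, Sk_rec. f_equal. ring. }
    split; auto.
    rewrite cf_HH_S, E1. simpl fst. simpl snd.
    replace (S (S (S (2 * k)))) with (S (2 * S k)) by lia. rewrite cf_codd.
    f_equal. ring.
Qed.

Lemma cfH_even k : cfH w (2 * k) = Sk t k.
Proof.
  destruct k. reflexivity.
  unfold cfH. replace (2 * S k)%nat with (S (S (2 * k))) by lia.
  rewrite (proj2 (cf_HH_vals k)). reflexivity.
Qed.

Lemma cfH_odd k : cfH w (2 * k + 1) = (Sk t (S k) - Sk t k)%Z.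
Proof.
  unfold cfH. replace (2 * k + 1)%nat with (S (2 * k)) by lia.
  rewrite (proj1 (cf_HH_vals k)). reflexivity.
Qed.

Lemma cfH_even2 k : cfH w (2 * k + 2) = Sk t (S k).
Proof.
  replace (2 * k + 2)%nat with (2 * S k)%nat by lia. apply cfH_even.
Qed.

End CF.


Lemma pow2k q k m : q ^ (2 * k + m) = q ^ k * q ^ k * q ^ m.
Proof.
  rewrite pow_add. replace (2 * k)%nat with (k + k)%nat by lia. rewrite pow_add. ring.
Qed.

Section Real.
Variable w : R.
Variable t : Z.
Hypothesis hT : IZR t + 2 - w = / w.
Hypothesis hw : 4 <= w.

Let q := / w.
Let Sr k := IZR (Sk t k).

Lemma wq : w * q = 1.
Proof. unfold q. field. lra. Qed.

Lemma Sr_rel k : Sr (S k) - q * Sr k = w ^ (S k).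
Proof.
  induction k.
  - unfold Sr. rewrite Sk_0, Sk_1, plus_IZR. simpl. unfold q. lra.
  - unfold Sr in *. rewrite Sk_rec, minus_IZR, mult_IZR, plus_IZR.
    change (w ^ S (S k)) with (w * w ^ S k). rewrite <- IHk.
    pose proof wq. simpl IZR.
    replace (IZR t + 2) with (w + q) by (unfold q; lra).
    transitivity (w * IZR (Sk t (S k)) - 1 * IZR (Sk t k)); [ring|].
    rewrite <- H. ring.
Qed.

Lemma q_pos : 0 < q < 1.
Proof. unfold q. split. apply Rinv_0_lt_compat; lra. rewrite <- Rinv_1. apply Rinv_lt_contravar; lra. Qed.

Lemma wq_pow k : w ^ k * q ^ k = 1.
Proof. rewrite <- Rpow_mult_distr, wq. apply pow1. Qed.

Lemma Sr_succ k : Sr (S k) = w ^ (S k) + q * Sr k.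
Proof. pose proof (Sr_rel k). lra. Qed.

Lemma Sr_G k : Sr k * q ^ k * (1 - q * q) = 1 - q ^ k * q ^ k * q * q.
Proof.
  induction k.
  - unfold Sr. rewrite Sk_0. simpl. ring.
  - rewrite Sr_succ. pose proof (wq_pow (S k)) as W.
    change (q ^ S k) with (q * q ^ k).
    change (q ^ S k) with (q * q ^ k) in W.
    transitivity ((w ^ S k * (q * q ^ k)) * (1 - q * q) + q * q * (Sr k * q ^ k * (1 - q * q))); [ring|].
    rewrite W, IHk. ring.
Qed.

Lemma Sr_H k : (Sr (S k) + Sr k) * (q ^ k * q) * (1 - q) = 1 - q ^ k * q ^ k * q * q * q.
Proof.
  rewrite Sr_succ. pose proof (wq_pow (S k)) as W.
  change (q ^ S k) with (q * q ^ k) in W.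
  transitivity ((w ^ S k * (q * q ^ k)) * (1 - q) + q * (Sr k * q ^ k * (1 - q * q))); [ring|].
  rewrite W, Sr_G. ring.
Qed.

Lemma Sr_nz k : Sr k <> 0.
Proof.
  intro Z. pose proof (Sr_G k) as G. rewrite Z in G. pose proof q_pos.
  pose proof (pow_le1 q k H). 
  assert (q ^ k * q ^ k * q * q < 1).
  { assert (q ^ k * q ^ k <= 1) by nra. assert (q * q < 1) by nra. nra. }
  lra.
Qed.

Lemma T1 c k : c = (1 + q) ^ 2 / (4 * q) -> / (c * (2 * Sr k) ^ 2) = am q (2 * k).
Proof.
  intro Hc. subst c. pose proof q_pos. pose proof (pow_le1 q k H). pose proof (Sr_nz k).
  unfold am, rr. rewrite (pow2k q k 1), (pow2k q k 2).
  replace (1 - q ^ k * q ^ k * q ^ 2) with (Sr k * q ^ k * (1 - q * q)) by (rewrite Sr_G; ring).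
  field. repeat split; try (apply Rgt_not_eq; nra); auto.
Qed.

Lemma T2 k : / (2 * Sr (S k) - (Sr (S k) - Sr k)) ^ 2 = am q (2 * k + 1).
Proof.
  pose proof q_pos. pose proof (pow_le1 q k H).
  unfold am, rr. replace (2 * k + 1 + 1)%nat with (2 * k + 2)%nat by lia.
  replace (2 * k + 1 + 2)%nat with (2 * k + 3)%nat by lia.
  rewrite (pow2k q k 2), (pow2k q k 3).
  replace (1 - q ^ k * q ^ k * q ^ 3) with ((Sr (S k) + Sr k) * (q ^ k * q) * (1 - q)) by (rewrite Sr_H; ring).
  assert (Sr (S k) + Sr k <> 0).
  { intro Z. pose proof (Sr_H k) as HH. rewrite Z in HH.
    assert (q ^ k * q ^ k * q * q * q < 1).
    { assert (q ^ k * q ^ k <= 1) by nra. assert (q * q < q) by nra. assert (q * q * q < q * q) by nra. nra. }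
    lra. }
  replace (2 * Sr (S k) - (Sr (S k) - Sr k)) with (Sr (S k) + Sr k) by ring.
  field. repeat split; try (apply Rgt_not_eq; lra); auto.
Qed.
End Real.


Lemma infinite_sum_ext f g l : (forall k, f k = g k) -> infinite_sum g l -> infinite_sum f l.
Proof.
  intros E H eps He. destruct (H eps He) as [N HN]. exists N. intros n Hn.
  rewrite (sum_eq f g n (fun i _ => E i)). apply HN; auto.
Qed.

Lemma am_bounds q j : 0 < q < 1 -> 0 < am q j < 1.
Proof.
  intro Hq. unfold am, rr.
  replace (j + 2)%nat with (S (j + 1)) by lia. simpl (q ^ S (j + 1)).
  pose proof (pow_le1 q (j + 1) Hq) as [P0 P1].
  assert (P2 : q ^ (j + 1) < 1).
  { replace (j + 1)%nat with (S j) by lia. simpl. pose proof (pow_le1 q j Hq). nra. }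
  assert (Hr : 1 < (1 - q * q ^ (j + 1)) / (1 - q)).
  { apply Rmult_lt_reg_r with (1 - q); [lra|]. unfold Rdiv.
    rewrite Rmult_assoc, Rinv_l by lra. nra. }
  split.
  - apply Rdiv_lt_0_compat; nra.
  - apply Rmult_lt_reg_r with (((1 - q * q ^ (j + 1)) / (1 - q)) ^ 2); [nra|]. unfold Rdiv at 1.
    rewrite Rmult_assoc, Rinv_l by nra. nra.
Qed.

Theorem theorem2 (n a b : Z)
  (hn : (2 <= n)%Z)
  (hsq : ~ exists m : Z, (m * m)%Z = n)
  (ha : (0 < a)%Z) (hb : (0 < b)%Z)
  (hpell : (a ^ 2 - n * b ^ 2 = -1)%Z) :
  let u := IZR a + IZR b * sqrt (IZR n) in
  infinite_sum
    (fun k : nat =>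
       RogersL (/ (IZR n * IZR b ^ 2 * (2 * IZR (cfH (u ^ 2) (2 * k))) ^ 2))
     + RogersL (/ (2 * IZR (cfH (u ^ 2) (2 * k + 2)) - IZR (cfH (u ^ 2) (2 * k + 1))) ^ 2))
    (RogersL (/ u ^ 2)).
Proof.
  intro u.
  assert (HA : 1 <= IZR a) by (apply (IZR_le 1); lia).
  assert (HB : 1 <= IZR b) by (apply (IZR_le 1); lia).
  assert (HN : 2 <= IZR n) by (apply (IZR_le 2); lia).
  assert (hp : (a * a - n * (b * b) = -1)%Z) by (rewrite <- hpell; ring).
  apply (f_equal IZR) in hp. rewrite minus_IZR, !mult_IZR in hp.
  set (A := IZR a) in *. set (B := IZR b) in *. set (N := IZR n) in *.
  set (s := sqrt N) in *.
  assert (Hs : s * s = N) by (apply sqrt_sqrt; lra).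
  assert (Hs0 : 0 <= s) by apply sqrt_pos.
  assert (Hs1 : 1 <= s) by nra.
  assert (Hu : 2 <= u) by (unfold u; nra).
  set (w := u ^ 2).
  assert (Hw4 : 4 <= w) by (unfold w; nra).
  assert (Hw : w = 2 * A * A + 1 + 2 * A * B * s).
  { unfold w, u. replace ((A + B * s) ^ 2) with (A * A + 2 * A * B * s + B * B * (s * s)) by ring.
    rewrite Hs. simpl in hp. lra. }
  set (t := (4 * a * a)%Z).
  assert (Ht : IZR t = 4 * A * A) by (unfold t; rewrite !mult_IZR; reflexivity).
  assert (hT : IZR t + 2 - w = / w).
  { rewrite Ht.
    assert (E : w * w - (4 * A * A + 2) * w + 1 = 0).
    { assert (E1 : (w - 2 * A * A - 1) * (w - 2 * A * A - 1) = 4 * A * A * (B * B * (s * s))).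
      { rewrite Hw. ring. }
      rewrite Hs in E1. simpl in hp. nra. }
    apply (Rmult_eq_reg_l w); [|lra]. rewrite Rinv_r by lra. lra. }
  set (q := / w).
  assert (Hq : 0 < q < 1) by (pose proof (q_bounds w Hw4); unfold q; lra).
  assert (Hc : N * B ^ 2 = (1 + / w) ^ 2 / (4 * / w)).
  { fold q. assert (Wq : w = / q) by (unfold q; rewrite Rinv_inv; reflexivity).
    assert (E2 : N * B ^ 2 = A * A + 1) by (simpl in hp; simpl; lra).
    rewrite E2. rewrite Ht in hT. fold q in hT.
    replace (A * A) with ((q - 2 + w) / 4) by lra. rewrite Wq. field. lra. }
  rewrite (RogersL_Lp q) by (rewrite Rabs_right; lra).
  apply (infinite_sum_ext _ (fun k => Lp (am q (2 * k)) + Lp (am q (2 * k + 1)))).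
  - intro k.
    rewrite (cfH_even w t hT Hw4 k), (cfH_even2 w t hT Hw4 k), (cfH_odd w t hT Hw4 k).
    rewrite minus_IZR.
    pose proof (T1 w t hT Hw4 _ k Hc) as E1. cbv beta in E1.
    pose proof (T2 w t hT Hw4 k) as E2. cbv beta in E2.
    fold q in E1, E2. rewrite E1, E2.
    pose proof (am_bounds q (2 * k + 1) Hq). pose proof (am_bounds q (2 * k) Hq).
    rewrite !RogersL_Lp; auto; rewrite Rabs_right; lra.
  - apply main_identity; auto.
Qed.
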